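(* Let $\widehat\Gamma$ be a timed region graph, let $\mu\in\Delta_{\mathrm{Min}}$ be regionally constant and let $(T^\mu,D^\mu)\models\mathrm{Opt}_{\mathrm{Max}}(\widehat\Gamma\upharpoonright\mu)$. If $\mathrm{Improve}_{\mathrm{Min}}(\mu,(T^\mu,D^\mu))=\mu$, then $(T^\mu,D^\mu)\models\mathrm{Opt}_{\mathrm{MinMax}}(\widehat\Gamma)$.
   Context: Fix $k\in\mathbb N$. Let $C$ be a finite set of clocks. A clock valuation is a function $\nu:C\to[0,k]$; $V$ is the set of clock valuations. For $t\ge 0$ let $(\nu+t)(c)=\nu(c)+t$; for $C'\subseteq C$ let $\mathrm{Reset}(\nu,C')(c)=0$ if $c\in C'$ and $=\nu(c)$ otherwise. Simple clock constraints are $c\bowtie i$ or $c-c'\bowtie i$ with $c,c'\in C$, $i\in\{0,\dots,k\}$, ${\bowtie}\in\{<,>,=,\le,\ge\}$. A clock region is an equivalence class of $V$ under ''satisfies the same simple clock constraints''; a clock zone is a convex union of clock regions. For a finite set $L$ of locations, a configuration is $s=(\ell,\nu)\in Q=L\times V$; write $s(c)=\nu(c)$ and $s+t=(\ell,\nu+t)$ (defined if $\nu+t\in V$). A region is $(\ell,P)$ (identified with $\{(\ell,\nu):\nu\in P\}$) for a clock region $P$; $[s]$ is the region containing $s$, $\mathcal R$ the set of regions, $\overline R$ the topological closure of $R$. A zone is a set $\{(\ell,\nu):\nu\in W_\ell\}$ with each $W_\ell$ a clock zone. A timed automaton $\mathcal T=(L,C,S,A,E,\delta,\rho,F)$ consists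 of finite $L$, finite $C$, a zone $S\subseteq Q$ of states, a finite set $A$ of actions, $E:A\to 2^S$ with every $E(a)$ a zone, $\delta:L\times A\to L$, $\rho:A\to 2^C$, and a zone $F\subseteq S$ of final states. For $s=(\ell,\nu)$: $s\to_t s'$ if $s'=s+t$ is defined and $s+t'\in S$ for all $t'\in[0,t]$; $s\xrightarrow{a}s'$ if $s'=(\delta(\ell,a),\mathrm{Reset}(\nu,\rho(a)))$, $s,s'\in S$ and $s\in E(a)$. For $(a,t)\in A\times\mathbb R_{\ge0}$, $\mathrm{Succ}(s,(a,t))=(\delta(\ell,a),\mathrm{Reset}(\nu+t,\rho(a)))$. A reachability-time game is $\Gamma=(\mathcal T,L_{\mathrm{Min}},L_{\mathrm{Max}})$ with $(L_{\mathrm{Min}},L_{\mathrm{Max}})$ a partition of $L$; $S_{\mathrm{Min}}$, $S_{\mathrm{Max}}$, $\mathcal R_{\mathrm{Min}}$, $\mathcal R_{\mathrm{Max}}$ are the states/regions with location in $L_{\mathrm{Min}}$ resp. $L_{\mathrm{Max}}$. Region relations: $R\to_*R'$ if there are $s\in R,s'\in R'$, $t\ge 0$ with $s\to_t s'$; $R\to_{+1}R'$ ($R'$ is the time successor of $R$) if $R\to_*R'$, $R\ne R'$, and $R\to_*R''\to_*R'$ implies $R''\in\{R,R'\}$; $R\xrightarrow aR'$ if there are $s\in R,s'\in R'$ with $s\xrightarrow a s'$. $R$ is thin if for all $s\in R$ and $\varepsilon>0$, $[s+\varepsilon]\neq[s]$. For thin $R''$, $b\in\{0,\dots,k\}$,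 $c\in C$: $R\to_{b,c}R''$ if $R\to_*R''$ and $s+(b-s(c))\in R''$ for all $s\in R$. Simple timed actions: $\mathcal A=A\times\{0,\dots,k\}\times C$; for $\alpha=(a,b,c)$, $t(s,\alpha)=b-s(c)$ if $s(c)\le b$ and $0$ otherwise, and $\mathrm{Succ}(s,\alpha)=\mathrm{Succ}(s,(a,t(s,\alpha)))$. For $F$ defined on $\overline{R'}$: $F^\oplus_\alpha(s)=t(s,\alpha)+F(\mathrm{Succ}(s,\alpha))$ and $F^\boxplus_\alpha(s)=1+F(\mathrm{Succ}(s,\alpha))$. Timed region graph $\widehat\Gamma=(\mathcal R,\mathcal M)$: $(R,\alpha,R')\in\mathcal M$ with $\alpha=(a,b,c)$ iff (i) $R\to_{b,c}R''\xrightarrow aR'$ for some $R''$; or (ii) $R\in\mathcal R_{\mathrm{Min}}$ and $R\to_{b,c}R''\to_{+1}R'''\xrightarrow aR'$ for some $R'',R'''$; or (iii) $R\in\mathcal R_{\mathrm{Max}}$ and $R\to_{b,c}R''$, $R'''\to_{+1}R''$, $R'''\xrightarrow aR'$ for some $R'',R'''$. (For $(R,\alpha,R')\in\mathcal M$ and $s\in R$, $\mathrm{Succ}(s,\alpha)\in\overline{R'}$.) Regional functions: maps $T$ assigning to each region $R$ a function $T(R):\overline R\to\mathbb R\cup\{\infty\}$ (resp. $D(R):\overline R\to\mathbb N\cup\{\infty\}$); $\widetilde T(s)=T([s])(s)$. Lexicographic order: $(x,y)\le^{\mathrm{lex}}(x',y')$ iff $x<x'$, or $x=x'$ and $y\le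 y'$. Strategies and subgraphs: a positional strategy for Min in $\widehat\Gamma$ is a map $\mu:S_{\mathrm{Min}}\to\mathcal M$ with $\mu(s)$ of the form $([s],\alpha,R)$; $\Delta_{\mathrm{Min}}$ is the set of these. $\mu$ is regionally constant if $[s]=[s']$ implies $\mu(s)=\mu(s')$ (write $\mu(R)$); then the strategy subgraph $\widehat\Gamma\upharpoonright\mu$ keeps all moves out of $\mathcal R_{\mathrm{Max}}$ and, out of each $R\in\mathcal R_{\mathrm{Min}}$, only $\mu(R)$. For $s\in S$ let $M_*(s,(T,D))$ be the set of moves $m=([s],\alpha,R')\in\mathcal M$ at which $(T(R')^\oplus_\alpha(s),D(R')^\boxplus_\alpha(s))$ is lexicographically minimal. Fix a function $\mathrm{Choose}$ selecting an element of each nonempty set of moves. $\mathrm{Improve}_{\mathrm{Min}}(\mu,(T,D))(s)=\mu(s)$ if $\mu(s)\in M_*(s,(T,D))$, and $=\mathrm{Choose}(M_*(s,(T,D)))$ otherwise. Optimality equations for a graph $G=(\mathcal R,\mathcal M')$, $\mathcal M'\subseteq\mathcal M$: $(T,D)\models\mathrm{Opt}_{\mathrm{Max}}(G)$ iff $(\widetilde T(s),\widetilde D(s))=(0,0)$ for $s\in F$ and, for all $s\in S\setminus F$, $(\widetilde T(s),\widetilde D(s))=\max^{\mathrm{lex}}\{(T(R')^\oplus_\alpha(s),D(R')^\boxplus_\alpha(s)):([s],\alpha,R')\in\mathcal M'\}$. $(T,D)\models\mathrm{Opt}_{\mathrm{MinMax}}(G)$ iff for $s\in F$ the pair is $(0,0)$,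 for $s\in S_{\mathrm{Min}}\setminus F$ it equals the $\min^{\mathrm{lex}}$ of that set, and for $s\in S_{\mathrm{Max}}\setminus F$ it equals the $\max^{\mathrm{lex}}$ of that set. *)

(* Defs.v *)
From Stdlib Require Import Reals List Classical ClassicalEpsilon.
Open Scope R_scope.
Set Implicit Arguments.

Inductive cmp := CLt | CGt | CEq | CLe | CGe.

Definition cmpR (o : cmp) (x y : R) : Prop :=
  match o with
  | CLt => x < y | CGt => x > y | CEq => x = y | CLe => x <= y | CGe => x >= y
  end.

Inductive sconstr (C : Type) :=
  | SC1 : C -> cmp -> nat -> sconstr C
  | SC2 : C -> C -> cmp -> nat -> sconstr C.

Definition sc_bound C (g : sconstr C) : nat :=
  match g with SC1 _ _ i => i | SC2 _ _ _ i => i end.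

Definition sat C (v : C -> R) (g : sconstr C) : Prop :=
  match g with
  | SC1 c o i => cmpR o (v c) (INR i)
  | SC2 c c' o i => cmpR o (v c - v c') (INR i)
  end.

Definition inV (k : nat) C (v : C -> R) : Prop := forall c, 0 <= v c <= INR k.

Definition clk_equiv (k : nat) C (v v' : C -> R) : Prop :=
  inV k v /\ inV k v' /\
  forall g : sconstr C, (sc_bound g <= k)%nat -> (sat v g <-> sat v' g).

Definition clock_zone (k : nat) C (W : (C -> R) -> Prop) : Prop :=
  (forall v, W v -> inV k v) /\
  (forall v v', W v -> clk_equiv k v v' -> W v') /\
  (forall v v' lam, W v -> W v' -> 0 <= lam <= 1 ->
     W (fun c => lam * v c + (1 - lam) * v' c)).

Definition zone (k : nat) L C (Z : L * (C -> R) -> Prop) : Prop :=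
  forall l, clock_zone k (fun v => Z (l, v)).

Definition finite_type (X : Type) : Prop := exists xs : list X, forall x, In x xs.

Record TA (k : nat) := mkTA {
  Loc : Type;
  Clk : Type;
  Act : Type;
  Loc_fin : finite_type Loc;
  Clk_fin : finite_type Clk;
  Act_fin : finite_type Act;
  St : Loc * (Clk -> R) -> Prop;
  St_zone : zone k St;
  En : Act -> Loc * (Clk -> R) -> Prop;
  En_zone : forall a, zone k (En a);
  En_sub : forall a s, En a s -> St s;
  delta : Loc -> Act -> Loc;
  rho : Act -> Clk -> bool;
  Fin : Loc * (Clk -> R) -> Prop;
  Fin_zone : zone k Fin;
  Fin_sub : forall s, Fin s -> St s
}.

(** (L_Min, L_Max) is the partition { l | isMin l = true }, { l | isMin l = false } *)
Record RTG (k : nat) := mkRTG {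
  TAof :> TA k;
  isMin : Loc TAof -> bool
}.

Inductive Rinf := RF (r : R) | RInf.
Inductive Ninf := NF (n : nat) | NInf.

Definition Radd (t : R) (x : Rinf) : Rinf :=
  match x with RF r => RF (t + r) | RInf => RInf end.
Definition Nsucc (x : Ninf) : Ninf :=
  match x with NF n => NF (S n) | NInf => NInf end.

Definition Rinf_lt (x y : Rinf) : Prop :=
  match x, y with
  | RF a, RF b => a < b
  | RF _, RInf => True
  | RInf, _ => False
  end.
Definition Ninf_le (x y : Ninf) : Prop :=
  match x, y with
  | NF a, NF b => (a <= b)%nat
  | _, NInf => True
  | NInf, NF _ => False
  end.

Definition lexle (p q : Rinf * Ninf) : Prop :=
  Rinf_lt (fst p) (fst q) \/ (fst p = fst q /\ Ninf_le (snd p) (snd q)).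

Definition is_lexmax (P : Rinf * Ninf -> Prop) (p : Rinf * Ninf) : Prop :=
  P p /\ forall q, P q -> lexle q p.
Definition is_lexmin (P : Rinf * Ninf -> Prop) (p : Rinf * Ninf) : Prop :=
  P p /\ forall q, P q -> lexle p q.

Section RegionGraph.
Variable k : nat.
Variable G : RTG k.

Definition conf := (Loc G * (Clk G -> R))%type.
Definition inQ (s : conf) : Prop := inV k (snd s).
Definition shift (s : conf) (t : R) : conf := (fst s, fun c => snd s c + t).
Definition reset (v : Clk G -> R) (X : Clk G -> bool) : Clk G -> R :=
  fun c => if X c then 0 else v c.

Definition delay (s : conf) (t : R) (s' : conf) : Prop :=
  0 <= t /\ inQ s' /\ s' = shift s t /\
  forall t', 0 <= t' <= t -> St G (shift s t').

Definition astep (s : conf) (a : Act G) (s' : conf) : Prop :=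
  s' = (delta G (fst s) a, reset (snd s) (rho G a)) /\
  St G s /\ St G s' /\ En G a s.

Definition region := conf -> Prop.
Definition rg (s : conf) : region :=
  fun s' => fst s' = fst s /\ clk_equiv k (snd s) (snd s').
Definition isReg (Rg : region) : Prop := exists s, inQ s /\ Rg = rg s.

Definition RMin (Rg : region) : Prop := exists s, Rg s /\ isMin G (fst s) = true.
Definition RMax (Rg : region) : Prop := exists s, Rg s /\ isMin G (fst s) = false.

Definition reach (R1 R2 : region) : Prop :=
  exists s s' t, R1 s /\ R2 s' /\ delay s t s'.
Definition tsucc (R1 R2 : region) : Prop :=
  reach R1 R2 /\ R1 <> R2 /\
  forall R3, isReg R3 -> reach R1 R3 -> reach R3 R2 -> R3 = R1 \/ R3 = R2.
Definition areach (R1 : region) (a : Act G) (R2 : region) : Prop :=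
  exists s s', R1 s /\ R2 s' /\ astep s a s'.
Definition thin (Rg : region) : Prop :=
  forall s, Rg s -> forall eps, eps > 0 -> rg (shift s eps) <> rg s.
Definition bc_reach (R1 : region) (b : nat) (c : Clk G) (R2 : region) : Prop :=
  isReg R2 /\ thin R2 /\ reach R1 R2 /\
  forall s, R1 s -> R2 (shift s (INR b - snd s c)).

(** simple timed actions (a,b,c); b ∈ {0..k} is enforced in [Moves] *)
Definition stact := (Act G * nat * Clk G)%type.

Definition tdelay (s : conf) (al : stact) : R :=
  let '(a, b, c) := al in
  if Rle_dec (snd s c) (INR b) then INR b - snd s c else 0.

Definition Succ (s : conf) (al : stact) : conf :=
  let '(a, b, c) := al in
  (delta G (fst s) a,
   reset (fun c' => snd s c' + tdelay s al) (rho G a)).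

Definition move := (region * stact * region)%type.
Definition src (m : move) : region := fst (fst m).
Definition mact (m : move) : stact := snd (fst m).
Definition tgt (m : move) : region := snd m.

Definition Moves (m : move) : Prop :=
  let '(R1, al, R2) := m in
  let '(a, b, c) := al in
  isReg R1 /\ isReg R2 /\ (b <= k)%nat /\
  ( (exists R3, bc_reach R1 b c R3 /\ areach R3 a R2)
  \/ (RMin R1 /\ exists R3 R4, bc_reach R1 b c R3 /\ isReg R4 /\
                               tsucc R3 R4 /\ areach R4 a R2)
  \/ (RMax R1 /\ exists R3 R4, bc_reach R1 b c R3 /\ isReg R4 /\
                               tsucc R4 R3 /\ areach R4 a R2) ).

(** regional functions: T(R) is only ever evaluated on the closure of R *)
Definition RegT := region -> conf -> Rinf.
Definition RegD := region -> conf -> Ninf.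
Definition tilde X (F : region -> conf -> X) (s : conf) : X := F (rg s) s.

Definition mval (T : RegT) (D : RegD) (s : conf) (m : move) : Rinf * Ninf :=
  (Radd (tdelay s (mact m)) (T (tgt m) (Succ s (mact m))),
   Nsucc (D (tgt m) (Succ s (mact m)))).

Definition SMin (s : conf) : Prop := St G s /\ isMin G (fst s) = true.

Definition is_strategy (mu : conf -> move) : Prop :=
  forall s, SMin s -> Moves (mu s) /\ src (mu s) = rg s.

Definition reg_const (mu : conf -> move) : Prop :=
  forall s s', SMin s -> SMin s' -> rg s = rg s' -> mu s = mu s'.

Definition restrict (mu : conf -> move) (m : move) : Prop :=
  Moves m /\ (RMax (src m) \/ exists s, SMin s /\ src m = rg s /\ mu s = m).

Definition OptMax (Mg : move -> Prop) (T : RegT) (D : RegD) : Prop :=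
  forall s, St G s ->
    (Fin G s -> tilde T s = RF 0 /\ tilde D s = NF 0) /\
    (~ Fin G s ->
       is_lexmax (fun p => exists m, Mg m /\ src m = rg s /\ p = mval T D s m)
                 (tilde T s, tilde D s)).

Definition OptMinMax (Mg : move -> Prop) (T : RegT) (D : RegD) : Prop :=
  forall s, St G s ->
    (Fin G s -> tilde T s = RF 0 /\ tilde D s = NF 0) /\
    (~ Fin G s -> isMin G (fst s) = true ->
       is_lexmin (fun p => exists m, Mg m /\ src m = rg s /\ p = mval T D s m)
                 (tilde T s, tilde D s)) /\
    (~ Fin G s -> isMin G (fst s) = false ->
       is_lexmax (fun p => exists m, Mg m /\ src m = rg s /\ p = mval T D s m)
                 (tilde T s, tilde D s)).

Definition Mstar (T : RegT) (D : RegD) (s : conf) (m : move) : Prop :=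
  Moves m /\ src m = rg s /\
  forall m', Moves m' -> src m' = rg s -> lexle (mval T D s m) (mval T D s m').

Definition choose_spec (Choose : (move -> Prop) -> move) : Prop :=
  forall X : move -> Prop, (exists m, X m) -> X (Choose X).

Definition Improve (Choose : (move -> Prop) -> move) (mu : conf -> move)
  (T : RegT) (D : RegD) (s : conf) : move :=
  if excluded_middle_informative (Mstar T D s (mu s)) then mu s
  else Choose (Mstar T D s).

End RegionGraph.

(* Main.v *)
Require Import Defs.
From Stdlib Require Import Reals.
From Stdlib Require Import List Lra Lia Classical ClassicalEpsilon FunctionalExtensionality PropExtensionality.
Import ListNotations.
Open Scope R_scope.

Lemma Ninf_total x y : Ninf_le x y \/ Ninf_le y x.
Proof. destruct x as [n|], y as [m|]; simpl; auto; lia. Qed.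

Lemma lexle_total p q : lexle p q \/ lexle q p.
Proof.
  destruct p as [r1 n1], q as [r2 n2]; unfold lexle; simpl.
  destruct r1 as [a|], r2 as [b|]; simpl; auto.
  - destruct (total_order_T a b) as [[H|H]|H]; auto.
    subst. destruct (Ninf_total n1 n2); auto.
  - destruct (Ninf_total n1 n2); auto.
Qed.

Lemma lexle_trans p q r : lexle p q -> lexle q r -> lexle p r.
Proof.
  destruct p as [[a|] [n|]], q as [[b|] [m|]], r as [[c|] [o|]]; unfold lexle; simpl;
  intros [H1|[E1 H1]] [H2|[E2 H2]];
  try discriminate; try contradiction;
  try (injection E1; intro); try (injection E2; intro); subst;
  intuition (try lra; try lia).
Qed.

Lemma fin_min (P : Rinf * Ninf -> Prop) (l : list (Rinf * Ninf)) :
  (forall x, P x -> In x l) -> (exists x, P x) ->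
  exists p, P p /\ forall q, P q -> lexle p q.
Proof.
  revert P; induction l as [|x l IH]; intros P Hl [y Hy].
  - destruct (Hl y Hy).
  - destruct (classic (exists z, P z /\ z <> x)) as [Hz|Hz].
    + destruct (IH (fun z => P z /\ z <> x)) as [p [[Pp Hpx] Hp]].
      * intros z [Pz Hzx]. destruct (Hl z Pz); [congruence|auto].
      * exact Hz.
      * destruct (classic (P x)) as [Px|Px].
        -- destruct (lexle_total x p) as [Hxp|Hpx'].
           ++ exists x; split; auto. intros q Pq.
              destruct (classic (q = x)) as [->|Hqx].
              ** right; split; auto; destruct (snd x); simpl; auto.
              ** eapply lexle_trans; [exact Hxp| apply Hp; auto].
           ++ exists p; split; auto. intros q Pq.
              destruct (classic (q = x)) as [->|Hqx]; auto.
        -- exists p; split; auto. intros q Pq. apply Hp; split; auto.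
           intro; subst; contradiction.
    + exists y; split; auto. intros q Pq.
      assert (q = x) by (apply NNPP; intro; apply Hz; eauto).
      assert (y = x) by (apply NNPP; intro; apply Hz; eauto).
      subst. right; split; auto; destruct (snd x); simpl; auto.
Qed.

Lemma image_fin {X K Z : Type} (P : X -> Prop) (key : X -> K) (F : X -> Z)
  (lk : list K) :
  (forall x y, P x -> P y -> key x = key y -> F x = F y) ->
  exists lz, forall x, P x -> In (key x) lk -> In (F x) lz.
Proof.
  intros HF. induction lk as [|kk lk IH].
  - exists nil; intros x _ [].
  - destruct IH as [lz Hlz].
    destruct (classic (exists x, P x /\ key x = kk)) as [[x0 [P0 K0]]|Hn].
    + exists (F x0 :: lz). intros x Px [E|I].
      * left; apply HF; congruence.
      * right; auto.
    + exists lz. intros x Px [E|I]; auto. exfalso; eauto.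
Qed.

Fixpoint abl (n : nat) : list (list bool) :=
  match n with
  | O => [nil]
  | S n => map (cons true) (abl n) ++ map (cons false) (abl n)
  end.

Lemma abl_in bl : In bl (abl (length bl)).
Proof.
  induction bl as [|b bl IH]; simpl; auto.
  apply in_or_app. destruct b; [left|right]; apply in_map; auto.
Qed.

Lemma map_eq_in {A B} (f h : A -> B) l x : map f l = map h l -> In x l -> f x = h x.
Proof.
  induction l; simpl; intros E I; [destruct I|].
  injection E; intros; destruct I; subst; auto.
Qed.

Section Fin.
Variable k : nat.
Variable G : RTG k.

Definition allc : list (sconstr (Clk G)) :=
  let cl := proj1_sig (constructive_indefinite_description _ (Clk_fin G)) in
  let ol := [CLt; CGt; CEq; CLe; CGe] in
  let il := seq 0 (S k) in
  map (fun p => match p with (c, o, i) => SC1 c o i end) (list_prod (list_prod cl ol) il) ++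
  map (fun p => match p with (c, c', o, i) => SC2 c c' o i end)
    (list_prod (list_prod (list_prod cl cl) ol) il).

Lemma allc_in g : (sc_bound g <= k)%nat -> In g allc.
Proof.
  unfold allc. destruct (constructive_indefinite_description _ (Clk_fin G)) as [cl Hcl]; simpl.
  assert (Ho : forall o : cmp, In o [CLt; CGt; CEq; CLe; CGe]) by (destruct o; simpl; tauto).
  destruct g as [c o i|c c' o i]; simpl; intro Hi; apply in_or_app.
  - left. apply (in_map (fun p => match p with (c, o, i) => SC1 c o i end) _ (c, o, i)).
    assert (In i (seq 0 (S k))) by (apply (proj2 (in_seq _ _ _)); lia); repeat apply in_prod; auto.
  - right. apply (in_map (fun p => match p with (c, c', o, i) => SC2 c c' o i end) _ (c, c', o, i)).
    assert (In i (seq 0 (S k))) by (apply (proj2 (in_seq _ _ _)); lia); repeat apply in_prod; auto.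
Qed.

Definition sig_of (v : Clk G -> R) : list bool :=
  map (fun g => if excluded_middle_informative (sat v g) then true else false) allc.

Lemma regs_fin : exists lr, forall R2, @isReg k G R2 -> In R2 lr.
Proof.
  destruct (Loc_fin G) as [ll Hll].
  destruct (image_fin (@inQ k G) (fun s : conf G => (fst s, sig_of (snd s))) (@rg k G)
    (list_prod ll (abl (length allc)))) as [lz Hlz].
  - intros x y Px Py E. injection E; intros Es Ef.
    assert (Hg : forall g, (sc_bound g <= k)%nat -> (sat (snd x) g <-> sat (snd y) g)).
    { intros g Hg. pose proof (map_eq_in _ _ _ g Es (allc_in g Hg)) as H; simpl in H.
      destruct (excluded_middle_informative (sat (snd x) g));
      destruct (excluded_middle_informative (sat (snd y) g)); try discriminate; tauto. }
    extensionality s'. apply propositional_extensionality. unfold rg, clk_equiv.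
    rewrite Ef. unfold inQ in Px, Py. split; intros [A [B [C D']]].
    + refine (conj A (conj Py (conj C _))).
      intros g Hb; specialize (Hg g Hb); specialize (D' g Hb); tauto.
    + refine (conj A (conj Px (conj C _))).
      intros g Hb; specialize (Hg g Hb); specialize (D' g Hb); tauto.
  - exists lz. intros R2 [s0 [Hq ->]]. apply Hlz; auto.
    apply in_prod; auto. unfold sig_of. rewrite <- (length_map (fun g => if excluded_middle_informative (sat (snd s0) g) then true else false)).
    apply abl_in.
Qed.

Lemma vals_fin (T : RegT G) (D : RegD G) (s : @conf k G) :
  exists l, forall p, (exists m, @Moves k G m /\ @src k G m = @rg k G s /\ p = @mval k G T D s m) -> In p l.
Proof.
  destruct regs_fin as [lr Hlr].
  destruct (Act_fin G) as [al Hal]. destruct (Clk_fin G) as [cl Hcl].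
  exists (map (fun q => match q with (a, b, c, R2) => @mval k G T D s (@rg k G s, (a, b, c), R2) end)
    (list_prod (list_prod (list_prod al (seq 0 (S k))) cl) lr)).
  intros p [m [Hm [_ ->]]].
  destruct m as [[R1 [[a b] c]] R2]. destruct Hm as [_ [HR2 [Hb _]]].
  apply (in_map (fun q => match q with (a, b, c, R2) => @mval k G T D s (@rg k G s, (a, b, c), R2) end)
    _ (a, b, c, R2)).
  assert (In b (seq 0 (S k))) by (apply (proj2 (in_seq _ _ _)); lia); repeat apply in_prod; auto.
Qed.

Lemma St_inQ s : St G s -> @inQ k G s.
Proof.
  intro H. destruct s as [l v]. destruct (St_zone (TAof G) l) as [H1 _]. exact (H1 v H).
Qed.

End Fin.

Theorem mainTheorem16 (k : nat) (G : RTG k)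
  (Choose : (move G -> Prop) -> move G) (mu : conf G -> move G)
  (T : RegT G) (D : RegD G) :
  choose_spec Choose ->
  is_strategy mu ->
  reg_const mu ->
  OptMax (restrict mu) T D ->
  (forall s, SMin s -> Improve Choose mu T D s = mu s) ->
  OptMinMax (@Moves k G) T D.
Proof.
  intros HC Hstr Hrc Hopt Himp s Hs.
  destruct (Hopt s Hs) as [Hf Hnf]. split; [exact Hf|].
  assert (Hrs : @rg k G s s).
  { pose proof (St_inQ _ _ _ Hs) as Hq. unfold inQ in Hq. split; auto. split; [exact Hq|]. split; [exact Hq|]. tauto. }
  split.
  - intros Hn Hmin.
    assert (HSs : @SMin k G s) by (split; auto).
    destruct (Hnf Hn) as [[m0 [[Hm0 Hr] [Hsrc Heq]]] _].
    assert (Hv : (tilde T s, tilde D s) = @mval k G T D s (mu s)).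
    { destruct Hr as [[s'' [Hs'' Hmax]]|[s' [HS' [Hsr Hmu]]]].
      - rewrite Hsrc in Hs''. destruct Hs'' as [E _]. congruence.
      - rewrite Heq, <- Hmu. f_equal. symmetry; apply Hrc; auto. congruence. }
    assert (Hms : @Mstar k G T D s (mu s)).
    { pose proof (Himp s HSs) as HI. unfold Improve in HI.
      destruct (excluded_middle_informative (@Mstar k G T D s (mu s))) as [M|M]; auto.
      rewrite <- HI. apply HC.
      destruct (vals_fin _ G T D s) as [l Hl].
      destruct (fin_min _ l Hl) as [p [[m [Hm [Hsm ->]]] Hp]].
      { exists (@mval k G T D s (mu s)). exists (mu s). destruct (Hstr s HSs); auto. }
      exists m. split; auto. split; auto. intros m' Hm' Hs'. apply Hp. eauto. }
    rewrite Hv. destruct Hms as [Hm [Hsm Hle]]. split.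
    + exists (mu s); auto.
    + intros q [m' [Hm' [Hs' ->]]]. apply Hle; auto.
  - intros Hn Hmax. destruct (Hnf Hn) as [[m0 [[Hm0 _] [Hsrc Heq]]] Hup]. split.
    + exists m0; auto.
    + intros q [m' [Hm' [Hs' ->]]]. apply Hup. exists m'. repeat split; auto.
      left. rewrite Hs'. exists s; auto.
Qed.
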